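(* Let $\ell=p_1^{\alpha_1}\cdots p_\omega^{\alpha_\omega}$ be the prime factorization of a positive integer $\ell$ (distinct primes $p_i$, $\alpha_i\ge1$), and let $\mathcal{A}$ be an $\ell$-Oddtown on $[n]$. For $i\in[\omega]$ let $\mathcal{A}'_i=\{A\in\mathcal{A}: |A|\equiv 0\pmod{p_i^{\alpha_i}}\}$, and let $M_i$ be the $|\mathcal{A}'_i|\times n$ $0$--$1$ matrix whose rows are the characteristic vectors of the sets in $\mathcal{A}'_i$. Call an odd prime $p_i$ dividing $\ell$ good if $M_i$ has at least $n^{0.4}$ distinct columns, and bad otherwise. Then either at most one odd prime divisor of $\ell$ is bad, or \[ |\mathcal{A}|\leq \omega n-n^{0.2}+\omega\ell . \]
   Context: An $\ell$-Oddtown on $[n]=\{1,\dots,n\}$ is a family $\mathcal{A}$ of subsets of $[n]$ such that $|A|\not\equiv 0 \pmod{\ell}$ for every $A\in\mathcal{A}$ and $|A\cap B|\equiv 0\pmod{\ell}$ for all distinct $A,B\in\mathcal{A}$. *)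

(* Defs.v *)
From HB Require Import structures.
From mathcomp Require Import all_boot all_order all_algebra.
From mathcomp Require Import reals exp.
Set Implicit Arguments. Unset Strict Implicit. Unset Printing Implicit Defensive.

Definition oddtown (l n : nat) (F : {set {set 'I_n}}) : Prop :=
  (forall A, A \in F -> ~~ (l %| #|A|)) /\
  (forall A B, A \in F -> B \in F -> A != B -> l %| #|A :&: B|).

Definition ppart (l p : nat) : nat := p ^ logn p l.

Definition Aprime (l n : nat) (F : {set {set 'I_n}}) (p : nat) : {set {set 'I_n}} :=
  [set A in F | ppart l p %| #|A|].

(* Column j of the 0-1 matrix with rows the characteristic vectors of the
   sets in S is the 0-1 vector indexed by S, i.e. the subset
   [set A in S | j \in A] of S. Number of distinct columns: *)
Definition distinct_columns (n : nat) (S : {set {set 'I_n}}) : nat :=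
  #|[set [set A in S | j \in A] | j : 'I_n]|.

(* Main.v *)
Require Import Defs.
From HB Require Import structures.
From mathcomp Require Import all_boot all_order all_algebra.
From mathcomp Require Import reals exp lra.
Import Order.TTheory GRing.Theory Num.Theory.
Set Implicit Arguments. Unset Strict Implicit. Unset Printing Implicit Defensive.

Section Key.
Variables (n p e : nat) (S : {set {set 'I_n}}) (K : finType) (cls : 'I_n -> K).
Hypothesis pp : prime p.
Hypothesis hS1 : forall A, A \in S -> ~~ (p ^ e %| #|A|).
Hypothesis hS2 : forall A B, A \in S -> B \in S -> A != B -> p ^ e %| #|A :&: B|.
Hypothesis hcls : forall A, A \in S -> forall j j', cls j = cls j' -> (j \in A) = (j' \in A).

Local Notation k := #|S|.
Let A (i : 'I_k) : {set 'I_n} := enum_val i.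
Let v (i : 'I_k) := logn p #|A i|.

Lemma AS i : A i \in S. Proof. exact: enum_valP. Qed.

Lemma Apos i : 0 < #|A i|.
Proof. case: (posnP #|A i|) => // h; have := hS1 (AS i); by rewrite h dvdn0. Qed.

Lemma v_lt i : v i < e.
Proof.
rewrite ltnNge; apply/negP => h; have := hS1 (AS i).
by rewrite (pfactor_dvdn _ pp (Apos i)) h.
Qed.

Lemma dvd_v i j : p ^ v j %| #|A i :&: A j|.
Proof.
case: (eqVneq i j) => [->|ij]; first by rewrite setIid pfactor_dvdnn.
apply: dvdn_trans (hS2 (AS i) (AS j) _).
  by rewrite dvdn_exp2l // ltnW // v_lt.
by apply: contra ij => /eqP /enum_val_inj ->.
Qed.

Let c i j := #|A i :&: A j| %/ p ^ v j.

Lemma c_diag i : ~~ (p %| c i i).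
Proof.
rewrite /c setIid; apply/negP => h.
have : p ^ (v i).+1 %| #|A i|.
  by rewrite -(divnK (pfactor_dvdnn p #|A i|)) expnSr mulnC dvdn_mul.
by rewrite (pfactor_dvdn _ pp (Apos i)) ltnn.
Qed.

Lemma c_off i j : i != j -> p %| c i j.
Proof.
move=> ij; have h : p ^ (v j).+1 %| #|A i :&: A j|.
  apply: dvdn_trans (hS2 (AS i) (AS j) _); first by rewrite dvdn_exp2l // v_lt.
  by apply: contra ij => /eqP /enum_val_inj ->.
move: h; rewrite /c; case/dvdnP => q ->.
by rewrite expnSr mulnCA mulKn ?expn_gt0 ?prime_gt0 // dvdn_mull.
Qed.

Local Open Scope ring_scope.
Definition Gm (R : pzRingType) : 'M[R]_k := \matrix_(i, j) ((c i j)%:R)%R.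

Lemma Gm_map (R : pzRingType) (f : {rmorphism int -> R}) : map_mx f (Gm int) = Gm R.
Proof. by apply/matrixP => i j; rewrite !mxE rmorph_nat. Qed.

Lemma det_Fp : \det (Gm 'F_p) != 0.
Proof.
have -> : Gm 'F_p = diag_mx (\row_i (c i i)%:R).
  apply/matrixP => i j; rewrite !mxE; case: (eqVneq i j) => [->|ij].
    by rewrite ?eqxx ?mulr1n.
  by rewrite mulr0n; apply/eqP; rewrite -(dvdn_pcharf (pchar_Fp pp)) c_off.
rewrite det_diag; apply/prodf_neq0 => i _; rewrite mxE.
by rewrite -(dvdn_pcharf (pchar_Fp pp)) c_diag.
Qed.

Lemma det_int : \det (Gm int) != 0.
Proof.
apply: contra det_Fp => /eqP h.
by rewrite -(Gm_map (intr : {rmorphism int -> 'F_p})) det_map_mx h rmorph0.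
Qed.
Local Open Scope ring_scope.

Let Im := [set cls j | j : 'I_n].
Local Notation d := #|Im|.
Let ev (x : 'I_d) : K := enum_val x.

Definition Mm : 'M[rat]_(k, n) := \matrix_(i, j) ((j \in A i)%:R).
Definition Xm : 'M[rat]_(k, d) := \matrix_(i, x) ([exists j in A i, cls j == ev x]%:R).
Definition Pm : 'M[rat]_(d, n) := \matrix_(x, j) ((cls j == ev x)%:R).
Definition Nm : 'M[rat]_(n, k) := \matrix_(j, i) ((j \in A i)%:R / (p ^ v i)%:R).

Lemma MXP : Mm = Xm *m Pm.
Proof.
apply/matrixP => i j; rewrite !mxE.
have cj : cls j \in Im by apply: imset_f.
rewrite (bigD1 (enum_rank_in cj (cls j))) //= big1 ?addr0.
  rewrite !mxE /ev enum_rankK_in // eqxx mulr1; congr (_%:R); congr (nat_of_bool _).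
  apply/idP/existsP => [jA | [j' /andP [j'A /eqP e']]]; first by exists j; rewrite jA eqxx.
  by rewrite -(hcls (AS i) e').
move=> x xne; rewrite !mxE; case: eqP => [ex|]; last by rewrite mulr0.
case/eqP: xne; apply: enum_val_inj; rewrite enum_rankK_in //.
Qed.

Lemma GMN : map_mx intr (Gm int) = Mm *m Nm.
Proof.
rewrite Gm_map; apply/matrixP => i i'; rewrite !mxE.
under eq_bigr => j _ do rewrite !mxE mulrA.
rewrite -mulr_suml natr_div ?dvd_v //.
  congr (_ / _).
  transitivity ((\sum_j ((j \in A i) * (j \in A i'))%N)%:R : rat); last first.
    by rewrite natr_sum; apply: eq_bigr => j _; rewrite natrM.
  congr (_%:R).
  rewrite -sum1_card big_mkcond /=; apply: eq_bigr => j _.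
  by rewrite in_setI; case: (j \in A i); case: (j \in A i').
by rewrite unitfE pnatr_eq0 -lt0n expn_gt0 prime_gt0.
Qed.

Lemma key_bound : (k <= d)%N.
Proof.
have u : map_mx (intr : int -> rat) (Gm int) \in unitmx.
  by rewrite unitmxE det_map_mx unitfE intr_eq0 det_int.
rewrite -(mxrank_unit u) GMN MXP.
apply: leq_trans (mxrankM_maxl _ _) _; apply: leq_trans (mxrankM_maxl _ _) _.
exact: rank_leq_col.
Qed.
End Key.

Lemma cover_count (T : finType) (F : {set T}) (s : seq nat) (B : nat -> {set T}) :
  (forall x, x \in F -> exists2 r, r \in s & x \in B r) ->
  #|F| <= \sum_(r <- s) #|B r|.
Proof.
elim: s F => [|r s IH] F H.
  rewrite big_nil leqn0 cards_eq0; apply/eqP/setP => x; rewrite inE.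
  by apply/negP => /H [r].
rewrite big_cons -(cardsID (B r) F) leq_add //.
  by apply: subset_leq_card; apply: subsetIr.
apply: IH => x; rewrite inE => /andP [xn xF].
have [r' ] := H x xF; rewrite inE => /orP [/eqP ->|]; first by rewrite (negbTE xn).
by move=> r's xr'; exists r'.
Qed.

Lemma sum_if (s : seq nat) (p a b : nat) (f : nat -> nat) :
  uniq s -> p \in s -> (forall r, r \in s -> f r <= (if r == p then a else b)) ->
  \sum_(r <- s) f r + b <= a + size s * b.
Proof.
move=> us ps hf.
apply: (@leq_trans ((\sum_(r <- s) (if r == p then a else b)) + b)).
  by rewrite leq_add2r big_seq [X in _ <= X]big_seq; apply: leq_sum => r; apply: hf.
rewrite (bigD1_seq p) //= eqxx -addnA leq_add2l.
rewrite (eq_bigr (fun _ => b)); last by move=> r /negbTE ->.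
rewrite big_const_seq iter_addn_0.
have := count_predC (pred1 p) s; rewrite count_uniq_mem // ps.
move=> <-; by rewrite (@eq_count _ _ (predC (pred1 p))) // mulnDl mul1n mulnC addnC.
Qed.

Local Open Scope ring_scope.

Lemma poly_ineq (R : realType) (x : R) : 0 <= x -> x^+2 + x <= x^+5 + 4.
Proof.
move=> x0.
case: (lerP x (3/2)) => h.
  have : x ^+ 2 <= 9/4 by rewrite expr2; nra.
  have : 0 <= x ^+ 5 by rewrite exprn_ge0.
  lra.
have h3 : 2 <= x ^+ 3 by rewrite !exprS expr0; nra.
have : 2 * x ^+ 2 <= x ^+ 5 by rewrite (_ : 5 = 2 + 3)%N // exprD; nra.
have : x <= x ^+ 2 by rewrite expr2; nra.
lra.
Qed.

Theorem lemma3p2 (R : realType) (l n : nat) (F : {set {set 'I_n}}) :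
  (0 < l)%N -> @oddtown l n F ->
  let omega := size (primes l) in
  let bad (p : nat) :=
    ((@distinct_columns n (@Aprime l n F p))%:R < (n%:R : R) `^ (2 / 5)) in
  (count (fun p => odd p && bad p) (primes l) <= 1)%N \/
  ((#|F|%:R : R) <= omega%:R * n%:R - (n%:R : R) `^ (1 / 5) + omega%:R * l%:R).
Proof.
move=> l0 [o1 o2] omega bad.
case: (leqP (count (fun p => odd p && bad p) (primes l)) 1) => hc; [by left | right].
have : has (fun p => odd p && bad p) (primes l) by rewrite has_count; apply: leq_trans hc.
case/hasP => q qP /andP [_ bq].
have om2 : (1 < omega)%N by apply: leq_trans hc (count_size _ _).
have : has (predC1 q) (primes l).
  apply/negPn/negP => /hasPn H.
  have : (size (primes l) <= size [:: q])%N.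
    apply: uniq_leq_size (primes_uniq l) _ => r /H /=; rewrite negbK inE => ->.
    by [].
  by rewrite leqNgt om2.
case/hasP => p pP /= pq.
set dq := @distinct_columns n (@Aprime l n F q).
pose Ap r := [set A in F | ~~ (ppart l r %| #|A|)%N].
pose B r := if r == p then @Aprime l n F q :&: Ap p else Ap r.
have fam : forall r (S : {set {set 'I_n}}) (K : finType) (cls : 'I_n -> K),
    r \in primes l -> S \subset Ap r ->
    (forall A, A \in S -> forall j j', cls j = cls j' -> (j \in A) = (j' \in A)) ->
    (#|S| <= #|[set cls j | j : 'I_n]|)%N.
  move=> r S K cls rP sub hc'.
  have inF : forall A, A \in S -> A \in F.
    by move=> A AS; have := subsetP sub A AS; rewrite inE => /andP[].
  apply: (@key_bound n r (logn r l)) => //.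
  - by move: rP; rewrite mem_primes => /andP[].
  - by move=> A /(subsetP sub); rewrite inE => /andP [_].
  - move=> A B' AS BS AB; apply: dvdn_trans (pfactor_dvdnn r l) _.
    by apply: o2 => //; apply: inF.
have hB : forall r, r \in primes l -> (#|B r| <= if r == p then dq else n)%N.
  move=> r rP; have [e|rp] := eqVneq r p; [subst r; rewrite /B eqxx | rewrite /B (negbTE rp)].
    apply: (fam p _ _ (fun j => [set A in @Aprime l n F q | j \in A])) => //.
      by apply: subsetIr.
    move=> A; rewrite inE => /andP [AQ _] j j' e.
    have := congr1 (fun X : {set {set 'I_n}} => A \in X) e. rewrite /= !inE.
    by move: AQ; rewrite inE => /andP [-> ->].
  apply: leq_trans (fam r (Ap r) _ id rP (subxx _) _) _.
    by move=> A _ j j' ->.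
  by apply: leq_trans (max_card _) _; rewrite card_ord.
have cov : (#|F| <= \sum_(r <- primes l) #|B r|)%N.
  apply: cover_count => A AF.
  case: (boolP (ppart l q %| #|A|)%N) => hq; last first.
    by exists q => //; rewrite /B eq_sym (negbTE pq) inE AF hq.
  case: (boolP (ppart l p %| #|A|)%N) => hp; last first.
    by exists p => //; rewrite /B eqxx !inE AF hq hp.
  have : has (fun r => ~~ (ppart l r %| #|A|)%N) (primes l).
    apply/negPn/negP => /hasPn H; apply: (negP (o1 A AF)).
    apply/(dvdn_partP _ l0) => r rP; rewrite p_part.
    by have := H r rP; rewrite negbK.
  case/hasP => r rP hr; exists r => //.
  have rp : r != p by apply: contra hr => /eqP ->.
  by rewrite /B (negbTE rp) inE AF hr.
have hs := sum_if (primes_uniq l) pP hB.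
have hnat : (#|F| + n <= dq + omega * n)%N by apply: leq_trans hs; rewrite leq_add2r.
have hR : (#|F|%:R + n%:R <= dq%:R + omega%:R * n%:R :> R).
  by rewrite -!natrM -!natrD ler_nat.
have lom : (4 <= omega * l)%N.
  have ql : (2 <= l)%N.
    move: (qP); rewrite mem_primes => /and3P [qpr _ qdl].
    exact: leq_trans (prime_gt1 qpr) (dvdn_leq l0 qdl).
  by have := leq_mul om2 ql.
have lomR : (4 <= omega%:R * l%:R :> R) by rewrite -natrM (ler_nat R 4).
set x := (n%:R : R) `^ (1 / 5).
have x0 : 0 <= x by apply: powR_ge0.
have n5 : (n%:R : R) = x ^+ 5.
  rewrite /x -powR_mulrn ?powR_ge0 // -powRrM.
  by rewrite div1r mulVf ?pnatr_eq0 // powRr1.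
have n2 : (n%:R : R) `^ (2 / 5) = x ^+ 2.
  rewrite /x -powR_mulrn ?powR_ge0 // -powRrM.
  by congr (_ `^ _); rewrite mulrC mul1r.
have := poly_ineq x0.
move: bq; rewrite /bad -/dq n2 => bq.
move=> hp.
lra.
Qed.
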